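(* Let $Ab_0$ denote the class of all finite abelian groups, and define $f:Ab_0\to(0,\infty)$ by $f(G)=\frac{|\mathrm{Aut}(G)|}{|G|}$, where $\mathrm{Aut}(G)$ is the automorphism group of $G$. Then the set $\mathrm{Im}(f)=\{f(G)\mid G\in Ab_0\}$ is dense in $[0,\infty)$. *)

(* Defs.v *)
From HB Require Import structures.
From mathcomp Require Import all_boot all_order all_algebra all_fingroup.
From mathcomp Require Import reals.
Set Implicit Arguments. Unset Strict Implicit. Unset Printing Implicit Defensive.
Import Order.TTheory GRing.Theory Num.Theory.
Local Open Scope ring_scope.

(* Aut G is MathComp's
   automorphism group of G (permutations of gT supported on G that are
   morphisms on G), whose cardinality is the order of the abstract Aut(G). *)
Definition autratio (R : realType) (gT : finGroupType) (G : {group gT}) : R :=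
  (#|Aut G|%:R / #|G|%:R).

(* Main.v *)
Require Import Defs.
From HB Require Import structures.
From mathcomp Require Import all_boot all_order all_algebra all_fingroup.
From mathcomp Require Import reals.
From mathcomp Require Import all_solvable.
From mathcomp Require Import ring lra zify.
Import Order.TTheory GRing.Theory Num.Theory.
Set Implicit Arguments. Unset Strict Implicit. Unset Printing Implicit Defensive.

Section GroupPart.
Local Open Scope group_scope.

Lemma Aut_stab (gT : finGroupType) (H K G : {group gT}) a x :
  H \x K = G -> coprime #|H| #|K| -> a \in Aut G -> x \in H -> a x \in H.
Proof.
move=> defG coHK AutGa Hx.
have [_ defHK cKH trHK] := dprodP defG.
have sHG : H \subset G by rewrite -defHK mulG_subl.
have Gax : a x \in G by rewrite Aut_closed // (subsetP sHG).
have [u [v [Hu Kv eax _]]] := mem_dprod defG Gax.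
have e1 : (a x ^+ #|H| = 1)%g.
  by rewrite -(autmE AutGa) -morphX ?(subsetP sHG) // expg_cardG // morph1.
have cuv : commute u v := commute_sym ((centP (subsetP cKH v Kv)) u Hu).
move: e1; rewrite [a x]eax (expgMn _ cuv).
rewrite expg_cardG // mul1g => /eqP; rewrite -order_dvdn => dvH.
have dvK : #[v]%g %| #|K| by rewrite order_dvdG.
have : #[v]%g %| 1 by rewrite -(eqP coHK) dvdn_gcd dvH dvK.
by rewrite dvdn1 order_eq1 => /eqP v1; rewrite v1 mulg1.
Qed.

Lemma Aut_norm (gT : finGroupType) (H K G : {group gT}) a :
  H \x K = G -> coprime #|H| #|K| -> a \in Aut G -> a \in 'N(H | 'P).
Proof.
move=> defG coHK AutGa; rewrite !inE /=; apply/subsetP => y Hy.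
by rewrite inE /= (Aut_stab defG coHK AutGa Hy).
Qed.

Lemma card_Aut_dprod (gT : finGroupType) (H K G : {group gT}) :
  H \x K = G -> coprime #|H| #|K| -> #|Aut G| = (#|Aut H| * #|Aut K|)%N.
Proof.
move=> defG coHK.
have defG' : K \x H = G by rewrite dprodC.
have coKH : coprime #|K| #|H| by rewrite coprime_sym.
have [_ defHK cKH trHK] := dprodP defG.
have sHG : H \subset G by rewrite -defHK mulG_subl.
have sKG : K \subset G by rewrite -defHK mulG_subr.
pose rho (a : {perm gT}) := (restr_perm H a, restr_perm K a).
have inj : {in Aut G &, injective rho}.
  move=> a b Aa Ab [eH eK]; apply: (eq_Aut Aa Ab) => x Gx.
  have [u [v [Hu Kv -> _]]] := mem_dprod defG Gx.
  have Gu : u \in G := subsetP sHG u Hu. have Gv : v \in G := subsetP sKG v Kv.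
  rewrite -(autmE Aa) -(autmE Ab) !morphM //=.
  rewrite !autmE.
  rewrite -(restr_permE (Aut_norm defG coHK Aa) Hu).
  rewrite -(restr_permE (Aut_norm defG' coKH Aa) Kv) eH eK.
  by rewrite (restr_permE (Aut_norm defG coHK Ab) Hu) (restr_permE (Aut_norm defG' coKH Ab) Kv).
have im : rho @: Aut G = setX (Aut H) (Aut K).
  apply/eqP; rewrite eqEsubset; apply/andP; split.
    apply/subsetP => z /imsetP[a0 Aa0 ->]; rewrite inE /=.
    by rewrite (Aut_restr_perm sHG Aa0) (Aut_restr_perm sKG Aa0).
  apply/subsetP => [[b0 c0]]; rewrite inE /= => /andP[Ab0 Ac0].
  pose fH := autm Ab0; pose fK := autm Ac0.
  have cf : fK @* K \subset 'C(fH @* H) by rewrite !im_autm.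
  pose f := dprodm defG cf.
  have injf : 'injm f.
    by rewrite injm_dprodm !injm_autm !im_autm trHK eqxx.
  have imf : f @* G = G by rewrite im_dprodm !im_autm.
  pose a := aut injf imf.
  have Aa : a \in Aut G by apply: Aut_aut.
  apply/imsetP; exists a => //; rewrite /rho; congr (_, _).
    symmetry; apply: (eq_Aut (Aut_restr_perm sHG Aa) Ab0) => h Hh.
    rewrite restr_permE ?(Aut_norm defG coHK Aa) // autE ?(subsetP sHG) //= (dprodmEl defG cf Hh) /= autmE.
  by []. symmetry; apply: (eq_Aut (Aut_restr_perm sKG Aa) Ac0) => h Hh.
  by rewrite restr_permE ?(Aut_norm defG' coKH Aa) // autE ?(subsetP sKG) //= (dprodmEr defG cf Hh) /= autmE.
by rewrite -cardsX -im card_in_imset.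
Qed.
Definition ET k := {dffun forall i : 'I_k, 'Z_2}.

Lemma card_ET k : #|[set: ET k]| = (2 ^ k)%N.
Proof.
rewrite cardsT card_dep_ffun foldr_map -[in RHS](size_enum_ord k).
by elim: (enum _) => //= x s ->; rewrite card_ord expnS.
Qed.

Definition pmap k (s : {perm 'I_k}) (f : ET k) : ET k := [ffun i => f (s i)].

Lemma pmap_inj k s : injective (@pmap k s).
Proof.
move=> f g /ffunP e; apply/ffunP => i.
by have := e (s^-1 i)%g; rewrite !ffunE permKV.
Qed.

Definition P k s := perm (@pmap_inj k s).

Lemma P_Aut k s : P s \in Aut [set: ET k].
Proof.
rewrite inE; apply/andP; split; first by apply/subsetP => x _; rewrite in_setT.
apply/morphicP => x y _ _; rewrite !permE; apply/ffunP => i.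
by rewrite !ffunE.
Qed.

Lemma P_inj k : injective (@P k).
Proof.
move=> s t e; apply/permP => i.
pose f : ET k := [ffun j => if j == s i then 1%R else 0%R].
have := congr1 (fun p : {perm ET k} => p f i) e.
rewrite !permE /pmap !ffunE eqxx.
by case: eqP => // _ /eqP; rewrite eq_sym oner_eq0.
Qed.

Lemma Aut_ET_ge k : (k`! <= #|Aut [set: ET k]|)%N.
Proof.
rewrite -card_Sn -(card_imset _ (@P_inj k)).
apply: subset_leq_card; apply/subsetP => _ /imsetP[s _ ->].
exact: P_Aut.
Qed.

Lemma card_Aut_isog (gT rT : finGroupType) (A : {group gT}) (B : {group rT}) :
  A \isog B -> #|Aut A| = #|Aut B|.
Proof.
case/isogP => f injf <-.
by rewrite (card_isog (injm_Aut injf (subxx A))).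
Qed.

Lemma cyclic_Zp n : cyclic (Zp n).
Proof.
rewrite /Zp; case: ifP => _; last exact: cyclic1.
by rewrite Zp_cycle cycle_cyclic.
Qed.

Lemma combine (R : realType) k n : (0 < n)%N -> coprime 2 n ->
  exists (gT : finGroupType) (G : {group gT}), abelian G /\
    autratio R G = (autratio R [set: ET k]%G * ((totient n)%:R / n%:R))%R.
Proof.
move=> n0 co2n.
pose E := [set: ET k]%G; pose Z := Zp_group n.
exists (ET k * 'Z_n)%type; exists (setX_group E Z); split.
  apply/centsP => -[a b] _ [c d] _.
  rewrite /commute /mulg /= /extprod_mulg /=; congr (_, _).
    by apply/ffunP => i; rewrite !ffunE /=; apply: addrC.
  exact: addrC.
have defG := setX_dprod E Z.
have cardE1 : #|setX E (1 : {set 'Z_n})| = (2 ^ k)%N by rewrite cardsX cards1 muln1 card_ET.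
have card1Z : #|setX (1 : {set ET k}) Z| = n by rewrite cardsX cards1 mul1n card_Zp.
have co : coprime #|setX E (1 : {set 'Z_n})| #|setX (1 : {set ET k}) Z|.
  by rewrite cardE1 card1Z coprimeXl.
rewrite /autratio (card_Aut_dprod defG co).
rewrite -(card_Aut_isog (isog_setX1 _ E)) -(card_Aut_isog (isog_set1X (ET k) Z)).
rewrite (card_Aut_cyclic (cyclic_Zp n)) card_Zp // cardsX card_Zp //.
rewrite !natrM invfM -!mulrA; congr (_ * _)%R; rewrite [RHS]mulrCA //.
Qed.

End GroupPart.

Lemma totD p m : prime p -> p %| m -> totient (p * m) = p * totient m.
Proof.
move=> pp pm.
have [->|m0] := posnP m; first by rewrite muln0.
have [m' cop def] := pfactor_coprime pp m0.
have e0 : 0 < logn p m by rewrite logn_gt0 mem_primes pp m0 pm.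
move: e0 def; case: (logn p m) => // e _ def.
have -> : p * m = m' * p ^ e.+2 by rewrite def mulnCA -expnS.
have c1 : coprime m' (p ^ e.+2) by rewrite coprime_sym coprimeXl.
have c2 : coprime m' (p ^ e.+1) by rewrite coprime_sym coprimeXl.
rewrite def (totient_coprime c1) (totient_coprime c2) !totient_pfactor //=.
rewrite expnS; ring.
Qed.

Lemma totE a b : (forall p, prime p -> p %| a -> p %| b) ->
  totient (a * b) = a * totient b.
Proof.
elim/ltn_ind: a => a IH H.
case: (leqP a 1) => [|a1].
  case: a {IH H} => [|[|]] // _.
  by rewrite !mul1n.
have pp : prime (pdiv a) := pdiv_prime a1.
have pa := pdiv_dvd a.
have a0 : 0 < a by apply: ltnW.
rewrite -(divnK pa) (mulnC (a %/ _)) -mulnA totD //; last first.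
  by apply: dvdn_mull; apply: H.
rewrite IH ?ltn_Pdiv ?prime_gt1 //; first by rewrite mulnA.
move=> q pq qd; apply: H => //; apply: dvdn_trans qd _.
by apply/dvdnP; exists (pdiv a); rewrite mulnC divnK.
Qed.

Lemma totL a b : totient (a * b) <= a * totient b.
Proof.
elim/ltn_ind: a b => a IH b.
case: (leqP a 1) => [|a1].
  case: a {IH} => [|[|]] // _.
  by rewrite !mul1n.
have pp : prime (pdiv a) := pdiv_prime a1.
have pa := pdiv_dvd a.
have a0 : 0 < a by apply: ltnW.
rewrite -(divnK pa) (mulnC (a %/ _)) -mulnA.
have le1 : totient (pdiv a * (a %/ pdiv a * b)) <= pdiv a * totient (a %/ pdiv a * b).
  have [d|nd] := boolP (pdiv a %| a %/ pdiv a * b); first by rewrite totD.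
  rewrite totient_coprime ?prime_coprime // totient_prime //.
  by rewrite leq_mul2r leq_pred orbT.
apply: (leq_trans le1); rewrite -mulnA leq_mul2l IH ?orbT // ltn_Pdiv ?prime_gt1 //.
Qed.

Fixpoint Pm (M j : nat) : nat :=
  match j with
  | 0 => 1
  | j'.+1 => if (M < j'.+1) && prime j'.+1 then j'.+1 * Pm M j' else Pm M j'
  end.

Lemma Pm_gt0 M j : 0 < Pm M j.
Proof. elim: j => //= j IH; case: ifP => // /andP[_ pj]; by rewrite muln_gt0 IH prime_gt0. Qed.

Lemma Pm_cop M j p : prime p -> j < p -> coprime p (Pm M j).
Proof.
move=> pp; elim: j => [|j IH] jp /=; first by rewrite coprimen1.
have IH' := IH (ltnW jp).
case: ifP => // /andP[_ pj]; rewrite coprimeMr IH' andbT.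
rewrite prime_coprime // dvdn_prime2 //; apply/eqP => e; by rewrite e ltnn in jp.
Qed.

Lemma Pm_cop2 M j : 1 < M -> coprime 2 (Pm M j).
Proof.
move=> M1; elim: j => [|j IH] /=; first by rewrite coprimen1.
case: ifP => // /andP[Mj pj]; rewrite coprimeMr IH andbT.
rewrite prime_coprime // dvdn_prime2 //; apply/eqP => e.
by rewrite -e ltnS in Mj; rewrite ltnNge Mj in M1.
Qed.

Lemma Pm_small M j : j <= M -> Pm M j = 1.
Proof.
elim: j => // j IH jM /=; rewrite ltnNge jM /=; exact: IH (ltnW jM).
Qed.

Lemma prime_dvd_fact p n : prime p -> p %| n`! -> p <= n.
Proof.
move=> pp; elim: n => [|n IH]; first by rewrite dvdn1 => /eqP e; rewrite e in pp.
rewrite factS Euclid_dvdM // => /orP[d|d]; first exact: dvdn_leq d.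
exact: leq_trans (IH d) (leqnSn n).
Qed.

Section Reals.
Variable R : realType.
Local Open Scope ring_scope.

Definition g n : R := (totient n)%:R / n%:R.

Lemma g_ge0 n : 0 <= g n.
Proof. by rewrite /g divr_ge0. Qed.

Lemma tot_le n : (totient n <= n)%N.
Proof. by have := totL n 1; rewrite !muln1. Qed.

Lemma g_le1 n : g n <= 1.
Proof.
rewrite /g; have [->|n0] := posnP n; first by rewrite invr0 mulr0.
by rewrite ler_pdivrMr ?ltr0n // mul1r ler_nat tot_le.
Qed.

Lemma g_gt0 n : (0 < n)%N -> 0 < g n.
Proof. by move=> n0; rewrite /g divr_gt0 // ltr0n ?totient_gt0. Qed.

Lemma g_mulE a b : (0 < a)%N -> (totient (a * b) = a * totient b)%N -> g (a * b) = g b.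
Proof.
move=> a0 e; rewrite /g e !natrM invfM mulrACA divff ?mul1r //.
by rewrite pnatr_eq0 -lt0n.
Qed.

Lemma g_mulP p b : prime p -> coprime p b ->
  g (p * b)%N = g b * (1 - (p%:R)^-1).
Proof.
move=> pp cop; rewrite /g totient_coprime // totient_prime // !natrM.
have p0 : (p%:R : R) != 0 by rewrite pnatr_eq0 -lt0n prime_gt0.
have -> : (p.-1%:R : R) = p%:R - 1 by rewrite -[in RHS](prednK (prime_gt0 pp)) -natr1 addrK.
have b0 : (b%:R : R) != 0.
  rewrite pnatr_eq0; apply/eqP => b0; move: cop; rewrite b0 /coprime gcdn0 => /eqP p1.
  by rewrite p1 in pp.
rewrite invfM; field; by rewrite p0 b0.
Qed.

Lemma g_step M j : g (Pm M j.+1) =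
  if (M < j.+1)%N && prime j.+1 then g (Pm M j) * (1 - ((j.+1)%:R)^-1) else g (Pm M j).
Proof.
rewrite /=; case: ifP => // /andP[_ pj].
by rewrite g_mulP // Pm_cop.
Qed.

Lemma g_fact M j : (M <= j)%N -> g (j`!) = g (M`!) * g (Pm M j).
Proof.
elim: j => [|j IH] Mj.
  by move: Mj; rewrite leqn0 => /eqP ->; rewrite /= /g /= divr1 mulr1.
case: (leqP M j) => [Mj'|jM]; last first.
  have -> : M = j.+1 by apply/eqP; rewrite eqn_leq Mj jM.
  by rewrite Pm_small // [g 1]/g /= divr1 mulr1.
rewrite g_step factS; case: ifP => [/andP[_ pj]|npj].
  rewrite g_mulP // ?IH // ?mulrA //.
  rewrite prime_coprime //; apply/negP => /(prime_dvd_fact pj); by rewrite ltnn.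
rewrite g_mulE ?IH // totE // => q pq qd.
apply: dvdn_fact; rewrite prime_gt0 //=.
have := dvdn_leq (ltn0Sn j) qd; rewrite leq_eqVlt => /orP[/eqP e|//].
by move: npj; rewrite ltnS Mj' -e pq.
Qed.

End Reals.

Lemma sum_div_bound n j : (0 < n)%N -> (forall k, 0 < k <= j -> k %| n) ->
  (\sum_(1 <= k < j.+1) totient (n %/ k) <= n)%N.
Proof.
move=> n0 dv.
rewrite -[X in (_ <= X)%N](sum_totient_dvd n) -(big_mkord (fun d => d %| n) totient).
have -> : \sum_(1 <= k < j.+1) totient (n %/ k) =
   \sum_(d <- [seq n %/ k | k <- index_iota 1 j.+1]) totient d by rewrite big_map.
rewrite -[X in (_ <= X)%N]big_filter.
refine (@uniq_sub_le_big nat addn leq leqnn (fun x y => leq_addr y x) 0 nat _ _ xpredT totient _ _ _).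
- rewrite map_inj_in_uniq ?iota_uniq // => a b; rewrite !mem_index_iota => ha hb e.
  have da := dv a ha; have db := dv b hb.
  have q0 : (0 < n %/ a)%N by rewrite divn_gt0 ?(dvdn_leq n0 da) //; case/andP: ha.
  apply/eqP; rewrite -(eqn_pmul2l q0); apply/eqP.
  by rewrite divnK // e divnK.
- exact/filter_uniq/iota_uniq.
- move=> _ /mapP[k hk ->]; rewrite mem_filter mem_index_iota.
  rewrite mem_index_iota in hk.
  rewrite ltnS leq_div andbT leq0n andbT; apply/dvdnP; exists k; by rewrite mulnC divnK ?dv.
Qed.

Section R3.
Variable R : realType.
Local Open Scope ring_scope.

Definition H j : R := \sum_(1 <= k < j.+1) (k%:R)^-1.

Lemma g_fact_H j : g R (j`!) * H j <= 1.
Proof.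
set n := j`!; have n0 : (0 < n)%N := fact_gt0 j.
have key : forall k, (1 <= k < j.+1)%N ->
    g R n * (k%:R)^-1 <= (totient (n %/ k))%:R / n%:R.
  move=> k /andP[k1 kj].
  have dk : (k %| n)%N by apply: dvdn_fact; rewrite k1 -ltnS.
  have := totL k (n %/ k); rewrite mulnC divnK // => le.
  rewrite /g -mulrA [_^-1 * _^-1]mulrC mulrA ler_pM2r ?invr_gt0 ?ltr0n //.
  by rewrite ler_pdivrMr ?ltr0n // -natrM ler_nat mulnC.
rewrite /H mulr_sumr; apply: le_trans (ler_sum_nat key) _.
rewrite -mulr_suml -natr_sum ler_pdivrMr ?ltr0n // mul1r ler_nat.
apply: sum_div_bound => // k; exact: dvdn_fact.
Qed.

Lemma H_ge m : (m%:R / 2) <= H (2 ^ m).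
Proof.
elim: m => [|m IH].
  by rewrite mul0r /H sumr_ge0 // => k _; rewrite invr_ge0 ler0n.
rewrite /H (@big_cat_nat _ _ _ (2 ^ m).+1) //=; last by rewrite ltnS leq_pexp2l.
set S1 := \sum_(1 <= k < _) _.
have h2 : 2^-1 <= \sum_((2 ^ m).+1 <= i < (2 ^ m.+1).+1) (i%:R : R)^-1.
  apply: le_trans (_ : \sum_((2 ^ m).+1 <= i < (2 ^ m.+1).+1) ((2 ^ m.+1)%:R : R)^-1 <= _).
    have a0 : ((2 ^ m)%:R : R) != 0 by rewrite pnatr_eq0 expn_eq0.
    rewrite sumr_const_nat subSS expnS mul2n -addnn addnK -[X in _ <= X]mulr_natr natrD.
    rewrite (_ : ((2 ^ m)%:R + (2 ^ m)%:R)^-1 * (2 ^ m)%:R = (2:R)^-1) //.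
    field.
    by rewrite -natrD pnatr_eq0 addn_eq0 expn_eq0.
  apply: ler_sum_nat => i /andP[i1 i2].
  have i0 : (0 < i)%N by apply: leq_ltn_trans (leq0n _) i1.
  by rewrite lef_pV2 ?posrE ?ltr0n ?expn_gt0 // ler_nat -ltnS.
have : S1 = H (2 ^ m) by [].
move=> e; rewrite e; move: IH h2; rewrite -natr1; lra.
Qed.

End R3.

Section R4.
Variable R : realType.
Local Open Scope ring_scope.

Lemma g_Pm_small M (c : R) : 0 < c -> exists j, g R (Pm M j) < c.
Proof.
move=> c0.
have G0 : 0 < g R (M`!) by apply: g_gt0; exact: fact_gt0.
set t := (c * g R (M`!))^-1.
have t0 : 0 <= t by rewrite invr_ge0 mulr_ge0 // ltW.
set N := Num.bound t.
have tN : t < N%:R by apply: archi_boundP.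
set j := (2 ^ (2 * N + M))%N.
have Mj : (M <= j)%N.
  apply: leq_trans (ltnW (ltn_expl _ (isT : (1 < 2)%N))).
  by rewrite leq_addl.
exists j.
have Hj := H_ge R (2 * N + M).
have hf := g_fact_H R j.
rewrite (g_fact R Mj) in hf.
have HNj : N%:R <= H R j.
  apply: le_trans Hj; rewrite natrD natrM.
  have := ler0n R M; lra.
have ct : c * g R M`! * t = 1 by rewrite /t mulfV // mulf_neq0 // ?gt_eqF.
rewrite ltNge; apply/negP => hc.
set x := g R (Pm M j) in hf hc.
set G := g R M`! in hf ct G0.
set h := H R j in hf HNj.
have th : t < h by apply: lt_le_trans HNj.
have h1 : c * G * t < c * G * h by rewrite ltr_pM2l // mulr_gt0.
have h2 : c * G * h <= G * x * h.
  rewrite (mulrC c); apply: ler_wpM2r; first by apply: ltW; apply: le_lt_trans th.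
  by apply: ler_wpM2l => //; apply: ltW.
lra.
Qed.

Lemma density (y eps : R) : 0 < y -> y <= 1 -> 0 < eps ->
  exists n, [/\ (0 < n)%N, coprime 2 n & `|g R n - y| < eps].
Proof.
move=> y0 y1 e0.
set M := (Num.bound (eps^-1)).+2.
have hM : eps^-1 < M%:R.
  apply: lt_le_trans (archi_boundP _) _; first by rewrite invr_ge0 ltW.
  by rewrite ler_nat /M -addn2 leq_addr.
have M1 : (1 < M)%N by [].
have ex : exists j, g R (Pm M j) < y := g_Pm_small M y0.
case: (ex_minnP ex) => j0 hj0 hmin.
have Mj0 : (M < j0)%N.
  rewrite ltnNge; apply/negP => jM.
  by move: hj0; rewrite Pm_small // /g /= divr1 ltNge y1.
case: j0 hj0 hmin Mj0 => [|i] //.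
move=> hj0 hmin Mi.
have hi : y <= g R (Pm M i).
  rewrite leNgt; apply/negP => lt.
  by have := hmin i lt; rewrite ltnn.
rewrite g_step in hj0.
case E: ((M < i.+1)%N && prime i.+1) in hj0; last by rewrite ltNge hi in hj0.
exists (Pm M i.+1); split; [exact: Pm_gt0 | exact: Pm_cop2 |].
rewrite g_step E.
have d0 : 0 < ((i.+1)%:R : R)^-1 by rewrite invr_gt0 ltr0n.
have de : ((i.+1)%:R : R)^-1 < eps.
  rewrite -[eps]invrK ltf_pV2 ?posrE ?invr_gt0 ?ltr0n //.
  by apply: lt_le_trans hM _; rewrite ler_nat ltnW.
have gl1 := g_le1 R (Pm M i).
set d := ((i.+1)%:R : R)^-1 in d0 de hj0 *.
set gi := g R (Pm M i) in hi gl1 hj0 *.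
have hgd : gi * d <= d by rewrite ler_piMl // ltW.
rewrite ltr_norml; apply/andP; split; nra.
Qed.

End R4.

Lemma fact_big m : (2 ^ (m + 4) * m.+1 <= (m + 4)`!)%N.
Proof.
elim: m => [|m IH] //.
rewrite addSn factS expnS.
apply: leq_trans (_ : (m + 4).+1 * (2 ^ (m + 4) * m.+1) <= _)%N; last first.
  by rewrite leq_mul2l IH orbT.
set a := (2 ^ (m + 4))%N.
rewrite -mulnA mulnCA [X in (_ <= X)%N]mulnCA leq_mul2l; apply/orP; right.
nia.
Qed.

Local Open Scope ring_scope.

Theorem theorem1p1 (R : realType) (x e : R) (hx : 0 <= x) (he : 0 < e) :
  exists (gT : finGroupType) (G : {group gT}),
    abelian G /\ `|autratio R G - x| < e.
Proof.
set m := Num.bound (x + e).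
have hm : x + e < m%:R by apply: archi_boundP; rewrite addr_ge0 // ltW.
set k := (m + 4)%N.
set A := autratio R [set: ET k]%G.
have hA : m%:R <= A.
  rewrite /A /autratio card_ET ler_pdivlMr ?ltr0n ?expn_gt0 // -natrM ler_nat.
  apply: leq_trans (Aut_ET_ge k); apply: leq_trans (fact_big m).
  by rewrite mulnC leq_mul2l leqnSn orbT.
have A0 : 0 < A by lra.
set y := (x + e / 2) / A.
have y0 : 0 < y by rewrite divr_gt0 //; lra.
have y1 : y <= 1 by rewrite ler_pdivrMr // mul1r; lra.
set eps := e / (2 * A).
have eps0 : 0 < eps by rewrite divr_gt0 // mulr_gt0.
have [n [n0 co hn]] := density y0 y1 eps0.
have [gT [G [abG hG]]] := combine R k n0 co.
exists gT, G; split => //.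
rewrite hG -/A.
have An : A != 0 by rewrite gt_eqF.
have e1 : A * g R n - x = A * (g R n - y) + e / 2.
  by rewrite /y mulrBr [A * (_ / A)]mulrC divfK //; ring.
rewrite -[(totient n)%:R / n%:R]/(g R n) e1.
apply: le_lt_trans (ler_normD _ _) _.
rewrite normrM (gtr0_norm A0) (gtr0_norm (_ : 0 < e / 2)); last by lra.
have h1 : A * `|g R n - y| < A * eps by rewrite ltr_pM2l.
have h2 : A * eps = e / 2 by rewrite /eps; field.
lra.
Qed.
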